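(* For every integer $n \geq 2$ there is an MSyDS $\mathcal{S}_n$ with $n$ nodes (and some finite number of layers), in which every local function is a threshold function and every master function is a symmetric Boolean function, whose phase space consists of a single cycle of length $2^n$.
   Context: A multilayer synchronous dynamical system (MSyDS) $\mathcal{S}$ over $\mathbb{B}=\{0,1\}$ with $k\ge 1$ layers consists of: a finite node set $V$ with $n$ nodes; undirected simple graphs $G_i=(V,E_i)$, $1\le i\le k$ (all layers share the node set $V$); for each layer $i$ and node $v$ a local function $f_{i,v}$ with output in $\mathbb{B}$ whose inputs are the states of the nodes in the closed neighborhood of $v$ in $G_i$ ($v$ and its neighbors in $G_i$); and for each node $v$ a master function $\psi_v:\mathbb{B}^k\to\mathbb{B}$. A configuration is a map $\mathcal{C}:V\to\mathbb{B}$. The successor of $\mathcal{C}$ is the configuration $\mathcal{C}'$ with $\mathcal{C}'(v)=\psi_v(f_{1,v}(\mathcal{C}),\dots,f_{k,v}(\mathcal{C}))$ for every $v$ (synchronous update), where $f_{i,v}(\mathcal{C})$ is $f_{i,v}$ evaluated on the states in $\mathcal{C}$ of the closed neighborhood of $v$ in $G_i$. The phase space is the directed graph on the $2^n$ configurations with an arc from each configuration to its successor. For an integer $\tau\ge0$, the $\tau$-threshold function equals 1 iff at least $\tau$ of its inputs equal 1 (a threshold larger than the number of inputs gives the constant-0 function); a threshold function is a $\tau$-threshold function for some $\tau\ge 0$. A Boolean function is symmetric if its value depends only on the number of 1's among its inputs. *)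

(* Defs.v *)
From mathcomp Require Import all_boot.
Set Implicit Arguments. Unset Strict Implicit. Unset Printing Implicit Defensive.

Definition config (n : nat) := {ffun 'I_n -> bool}.

Definition simple_graph (n : nat) (e : rel 'I_n) : Prop :=
  (forall u v, e u v = e v u) /\ (forall v, e v v = false).

Definition closed_nbhd (n : nat) (e : rel 'I_n) (v : 'I_n) : {set 'I_n} :=
  [set u | (u == v) || e v u].

(* a local function of node v in layer with graph e: any Boolean function
   whose inputs are the states of the closed neighborhood of v, i.e. a map
   on configurations depending only on the states in the closed neighborhood *)
Definition local_fun_of (n : nat) (e : rel 'I_n) (v : 'I_n)
    (f : config n -> bool) : Prop :=
  forall C D : config n, (forall u, u \in closed_nbhd e v -> C u = D u) -> f C = f D.

Definition is_threshold_fun (n : nat) (e : rel 'I_n) (v : 'I_n)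
    (f : config n -> bool) : Prop :=
  exists tau : nat, forall C : config n,
    f C = (tau <= #|[set u in closed_nbhd e v | C u]|).

Definition symmetric_bfun (k : nat) (psi : {ffun 'I_k -> bool} -> bool) : Prop :=
  forall x y : {ffun 'I_k -> bool},
    #|[set i | x i]| = #|[set i | y i]| -> psi x = psi y.

Definition msyds_step (n k : nat) (f : 'I_k -> 'I_n -> config n -> bool)
    (psi : 'I_n -> {ffun 'I_k -> bool} -> bool) (C : config n) : config n :=
  [ffun v => psi v [ffun i => f i v C]].

(* the phase space (functional graph of F on all configurations) is a single
   cycle through all configurations: every configuration reaches every other
   one; for a functional graph this is exactly "one cycle of length 2^n". *)
Definition phase_space_single_cycle (n : nat) (F : config n -> config n) : Prop :=
  forall C D : config n, exists m : nat, iter m F C = D.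

(* Main.v *)
Require Import Defs.
From mathcomp Require Import all_boot zify.
Set Implicit Arguments. Unset Strict Implicit. Unset Printing Implicit Defensive.
Definition Ssum (c : nat -> bool) m := \sum_(i < m) c i.
Definition Vsum (c : nat -> bool) m := \sum_(i < m) c i * 2 ^ i.

Lemma Ssum_le c m : Ssum c m <= m.
Proof.
elim: m => [|m IH]; first by rewrite /Ssum big_ord0.
rewrite /Ssum big_ord_recr /=. move: IH; rewrite /Ssum. case: (c m) => /=; lia.
Qed.

Lemma Vsum_lt c m : Vsum c m < 2 ^ m.
Proof.
elim: m => [|m IH]; first by rewrite /Vsum big_ord0.
rewrite /Vsum big_ord_recr /= expnS. move: IH; rewrite /Vsum. case: (c m) => /=; lia.
Qed.

Lemma counter c c' m :
  (forall i, i < m -> c' i = c i (+) (i <= Ssum c i)) ->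
  Vsum c' m + 2 ^ m * (m <= Ssum c m) = Vsum c m + 1.
Proof.
elim: m => [|m IH] H; first by rewrite /Vsum /Ssum !big_ord0.
have := IH (fun i Hi => H i (ltnW Hi)).
have Hm := H m (ltnSn m). have Hle := Ssum_le c m.
rewrite /Vsum /Ssum !big_ord_recr /= expnS Hm.
rewrite /Vsum /Ssum in Hle *.
set V1 := \sum_(i < m) c' i * 2 ^ i.
set V0 := \sum_(i < m) c i * 2 ^ i.
set S0 := \sum_(i < m) c i.
set P := 2 ^ m.
case: (c m); case: (leqP m S0) => Hs /=; nia.
Qed.

Section Sys.
Variable n : nat.
Local Notation N := n.+1.
Local Notation K := (N + N + N).

Definition role (i : nat) := if i < N then 0 else if i < N + N then 1 else 2.
Definition ctr (i : nat) := i - N * role i.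
Definition star (j : nat) : rel 'I_N :=
  fun u w => ((val u == j) && (val w < j)) || ((val w == j) && (val u < j)).
Definition Gr (i : 'I_K) : rel 'I_N :=
  if role i == 2 then (fun _ _ => false) else star (ctr i).
Definition tau (i : 'I_K) (v : 'I_N) : nat :=
  if val v == ctr i then (if role i == 0 then ctr i else if role i == 1 then (ctr i).+1 else 1)
  else N.+1.
Definition cnt (i : 'I_K) (v : 'I_N) (C : config N) :=
  #|[set u in closed_nbhd (Gr i) v | C u]|.
Definition fl (i : 'I_K) (v : 'I_N) (C : config N) : bool := tau i v <= cnt i v C.
Definition psi0 (v : 'I_N) (x : {ffun 'I_K -> bool}) : bool :=
  (#|[set i | x i]| == 1) || (#|[set i | x i]| == 2).
Definition cf (C : config N) (i : nat) : bool := C (inord i).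

Lemma Gr_simple i : simple_graph (Gr i).
Proof.
rewrite /Gr; case: ifP => _; split => //.
- by move=> u w; rewrite /star orbC.
- by move=> v; rewrite /star; case: eqP => //= ->; rewrite ltnn.
Qed.

Lemma fl_local i v : local_fun_of (Gr i) v (fl i v).
Proof.
move=> C D H; rewrite /fl /cnt; congr (_ <= _); apply: eq_card => u.
rewrite !inE.
have := H u; rewrite /closed_nbhd inE; case: (_ || _) => //= -> //.
Qed.

Lemma fl_thr i v : is_threshold_fun (Gr i) v (fl i v).
Proof. by exists (tau i v). Qed.

Lemma psi0_sym v : symmetric_bfun (psi0 v).
Proof. by move=> x y H; rewrite /psi0 H. Qed.

Lemma fl_off (i : 'I_K) (v : 'I_N) (C : config N) : val v != ctr i -> fl i v C = false.
Proof.
move=> H; rewrite /fl /tau (negbTE H).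
have := max_card [set u in closed_nbhd (Gr i) v | C u]; rewrite card_ord /cnt.
lia.
Qed.

Lemma cnt_star (i : 'I_K) (v : 'I_N) (C : config N) : role i != 2 -> ctr i = v ->
  cnt i v C = Ssum (cf C) v.+1.
Proof.
move=> Hr Hc; rewrite /cnt /Gr (negbTE Hr) Hc /Ssum.
rewrite (@big_ord_widen nat 0 addn v.+1 N (cf C)) //.
rewrite -sum1_card big_mkcond /= [RHS]big_mkcond /=.
apply: eq_bigr => u _; rewrite !inE /star /cf inord_val eqxx /= ltnn andbF orbF.
have -> : (val u == val v) || (val u < val v) = (u <= v) by rewrite [RHS]leq_eqVlt.
by rewrite ltnS; case: (u <= v); case: (C u).
Qed.

Lemma cnt_empty (i : 'I_K) (v : 'I_N) (C : config N) : role i == 2 -> cnt i v C = cf C v.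
Proof.
move=> Hr; rewrite /cnt /Gr Hr /cf inord_val.
case Hv: (C v).
- suff -> : [set u in closed_nbhd (fun _ _ : 'I_N => false) v | C u] = [set v] by rewrite cards1.
  by apply/setP => u; rewrite !inE orbF; case: eqP => // ->.
- suff -> : [set u in closed_nbhd (fun _ _ : 'I_N => false) v | C u] = set0 by rewrite cards0.
  by apply/setP => u; rewrite !inE orbF; case: eqP => // ->; rewrite Hv.
Qed.

Lemma count_x (C : config N) (v : 'I_N) :
  #|[set i | [ffun i => fl i v C] i]| =
  cf C v + (v <= Ssum (cf C) v.+1) + (v.+1 <= Ssum (cf C) v.+1).
Proof.
have Hv := ltn_ord v.
have H0 : v < K by lia.
have H1 : N + v < K by lia.
have H2 : N + N + v < K by lia.
pose i0 := Ordinal H0. pose i1 := Ordinal H1. pose i2 := Ordinal H2.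
have r0 : role i0 = 0 by rewrite /role /=; repeat (case: ifP => ?); lia.
have r1 : role i1 = 1 by rewrite /role /=; repeat (case: ifP => ?); lia.
have r2 : role i2 = 2 by rewrite /role /=; repeat (case: ifP => ?); lia.
have c0 : ctr i0 = v by rewrite /ctr r0 /=; lia.
have c1 : ctr i1 = v by rewrite /ctr r1 /=; lia.
have c2 : ctr i2 = v by rewrite /ctr r2 /=; lia.
rewrite -sum1_card big_mkcond /=.
rewrite (bigD1 i0) // (bigD1 i1) /=; last by apply/eqP => /(congr1 val) /=; lia.
rewrite (bigD1 i2) /=; last by apply/andP; split; apply/eqP => /(congr1 val) /=; lia.
rewrite big1 ?addn0; last first.
  move=> i /andP [/andP [Hi0 Hi1] Hi2]; rewrite inE ffunE fl_off //.
  move: Hi0 Hi1 Hi2; rewrite -!val_eqE /= /ctr /role.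
  have := ltn_ord i.
  repeat (case: ifP => ?); lia.
rewrite !inE !ffunE /fl /tau r0 r1 r2 c0 c1 c2 eqxx /=.
rewrite (@cnt_star i0 v C _ c0) ?r0 // (@cnt_star i1 v C _ c1) ?r1 // (@cnt_empty i2 v C) ?r2 //.
rewrite eqxx; case: (cf C v); case: (v <= _); case: (v < _) => /=; lia.
Qed.

Lemma step_bit (C : config N) (v : 'I_N) :
  msyds_step fl psi0 C v = cf C v (+) (v <= Ssum (cf C) v).
Proof.
rewrite /msyds_step ffunE /psi0 count_x.
have := Ssum_le (cf C) v.
rewrite /Ssum big_ord_recr /=.
case: (cf C v) => /=; case: leqP => /=; case: leqP => /=; try lia.
Qed.

Local Notation F := (msyds_step fl psi0).
Definition Vn (C : config N) := Vsum (cf C) N.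

Lemma cf_step (C : config N) i : i < N -> cf (F C) i = cf C i (+) (i <= Ssum (cf C) i).
Proof. by move=> Hi; rewrite {1}/cf step_bit inordK. Qed.

Lemma V_step (C : config N) : Vn (F C) = (Vn C + 1) %% 2 ^ N.
Proof.
have H := @counter (cf C) (cf (F C)) N (fun i Hi => cf_step C Hi).
by rewrite /Vn -H (addnC (Vsum (cf (F C)) N)) mulnC modnMDl modn_small // Vsum_lt.
Qed.

Lemma V_iter (C : config N) j : Vn (iter j F C) = (Vn C + j) %% 2 ^ N.
Proof.
elim: j => [|j IH]; first by rewrite addn0 modn_small // Vsum_lt.
by rewrite iterS V_step IH modnDml addn1 addnS.
Qed.

Lemma single_cycle : phase_space_single_cycle F.
Proof.
move=> C D.
have inj : injective (fun j : 'I_(2 ^ N) => iter j F C).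
  move=> a b /(congr1 Vn); rewrite !V_iter => /eqP; rewrite eqn_modDl => /eqP.
  by rewrite !modn_small // => /val_inj.
have : D \in [set iter j F C | j : 'I_(2 ^ N)].
  suff -> : [set iter j F C | j : 'I_(2 ^ N)] = setT by rewrite inE.
  apply/eqP; rewrite eqEcard subsetT /= cardsT card_imset // card_ffun card_bool !card_ord.
  by [].
by case/imsetP => j _ ->; exists j.
Qed.

End Sys.

Theorem theorem3p3 :
  forall n : nat, 2 <= n ->
  exists (k : nat) (G : 'I_k -> rel 'I_n)
         (f : 'I_k -> 'I_n -> config n -> bool)
         (psi : 'I_n -> {ffun 'I_k -> bool} -> bool),
    1 <= k /\
    (forall i, simple_graph (G i)) /\
    (forall i v, local_fun_of (G i) v (f i v)) /\
    (forall i v, is_threshold_fun (G i) v (f i v)) /\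
    (forall v, symmetric_bfun (psi v)) /\
    phase_space_single_cycle (msyds_step f psi).
Proof.
move=> [|n] // _.
exists (n.+1 + n.+1 + n.+1), (@Gr n), (@fl n), (@psi0 n).
split; first by rewrite addnS.
split; first exact: Gr_simple.
split; first exact: fl_local.
split; first exact: fl_thr.
split; first exact: psi0_sym.
exact: single_cycle.
Qed.
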